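(* Let $k\ge2$ and let $\mathcal C_2$ be the binary $(2k+1,k)$ code with generator matrix $G_c=(e_1\ \ e_1\ \ e_1+e_2\ \ e_2\ \ e_2+e_3\ \ e_3\ \cdots\ e_{k-1}+e_k\ \ e_k\ \ e_k)$. Then every erasure pattern with at most $2$ erasures allows for parallel $3$-repair.
   Context: $e_i$ denotes the $i$-th standard unit vector of $\mathbb F_2^k$; $\mathcal C_2$ has minimum distance $3$. Let $g_1,\dots,g_{2k+1}$ be the columns of $G_c$; nodes are the coordinates of codewords $c=uG_c$. An erasure pattern is a set of erased nodes; the others are live. A node $c_i$ is related to distinct nodes $c_{j_1},\dots,c_{j_\gamma}$ (all different from $c_i$) if $g_i=g_{j_1}+\dots+g_{j_\gamma}$. An erased node allows for $r$-repair if it is related to $\gamma\le r$ live nodes. An erasure pattern allows for parallel $r$-repair if each erased node allows for $r$-repair with respect to the original set of live nodes. *)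

(* Defs.v *)
From mathcomp Require Import all_boot all_order all_algebra.
Set Implicit Arguments. Unset Strict Implicit. Unset Printing Implicit Defensive.
Import GRing.Theory.
Local Open Scope ring_scope.

(* Standard unit vector e_{i+1} of F_2^k, 0-indexed: unitv k i has a 1 at
   position i (positions 0..k-1). *)
Definition unitv (k i : nat) : 'rV['F_2]_k :=
  \row_(l < k) (if nat_of_ord l == i then 1 else 0).

(* Column j (0-indexed, j = 0..2k) of
   G_c = (e1 e1 e1+e2 e2 e2+e3 e3 ... e_{k-1}+e_k e_k e_k). *)
Definition gcol (k : nat) (j : 'I_(2 * k + 1)) : 'rV['F_2]_k :=
  let j' := nat_of_ord j in
  if j' == 0%N then unitv k 0
  else if odd j' then unitv k j'./2
  else if j' == (2 * k)%N then unitv k (k - 1)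
  else unitv k (j'./2 - 1) + unitv k j'./2.

Definition related (k : nat) (i : 'I_(2 * k + 1)) (S : {set 'I_(2 * k + 1)}) :=
  i \notin S /\ gcol i = \sum_(j in S) gcol j.

Definition allows_repair (k : nat) (E : {set 'I_(2 * k + 1)}) (r : nat)
  (i : 'I_(2 * k + 1)) :=
  exists S : {set 'I_(2 * k + 1)},
    [/\ related i S, [disjoint S & E] & (#|S| <= r)%N].

Definition parallel_repair (k : nat) (E : {set 'I_(2 * k + 1)}) (r : nat) :=
  forall i, i \in E -> allows_repair E r i.

(* Main.v *)
Require Import Defs.
From mathcomp Require Import all_boot all_order all_algebra.
From mathcomp Require Import zify.
Import GRing.Theory.
Local Open Scope ring_scope.

Definition gn (k : nat) (j' : nat) : 'rV['F_2]_k :=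
  if j' == 0%N then unitv k 0
  else if odd j' then unitv k j'./2
  else if j' == (2 * k)%N then unitv k (k - 1)
  else unitv k (j'./2 - 1) + unitv k j'./2.

Lemma gcolE k (j : 'I_(2 * k + 1)) : gcol j = gn k (val j).
Proof. by []. Qed.

Lemma gn_zero k : gn k 0 = unitv k 0. Proof. by []. Qed.

Lemma gn_odd k m : gn k (2 * m + 1) = unitv k m.
Proof.
rewrite /gn.
have -> : (2 * m + 1 == 0)%N = false by lia.
have -> : odd (2 * m + 1) by rewrite addn1 /= oddM.
by rewrite -divn2; congr unitv; lia.
Qed.

Lemma gn_even k m : (1 <= m)%N -> (m < k)%N ->
  gn k (2 * m) = unitv k (m - 1) + unitv k m.
Proof.
move=> h1 h2; rewrite /gn.
have -> : (2 * m == 0)%N = false by lia.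
have -> : odd (2 * m) = false by rewrite oddM.
have -> : (2 * m == 2 * k)%N = false by lia.
have -> : ((2 * m)./2 = m)%N by rewrite -divn2; lia.
by [].
Qed.

Lemma gn_top k : (1 <= k)%N -> gn k (2 * k) = unitv k (k - 1).
Proof.
move=> h1; rewrite /gn.
have -> : (2 * k == 0)%N = false by lia.
have -> : odd (2 * k) = false by rewrite oddM.
by rewrite eqxx.
Qed.

Ltac fin := rewrite /= ?inE; lia.
Ltac vec := apply/rowP => l; rewrite /unitv !mxE; do ![case: (_ == _)]; by apply/eqP.

Lemma key k (hk : (2 <= k)%N) vi ve : (vi < 2 * k + 1)%N ->
  exists s : seq nat,
    [/\ uniq s, all (fun x => x < 2 * k + 1)%N s, (size s <= 3)%N,
        vi \notin s & ve \notin s] /\ gn k vi = \sum_(x <- s) gn k x.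
Proof.
move=> hv.
set m := (vi %/ 2)%N.
have [hv1|hv1] : vi = (2 * m + 1)%N \/ vi = (2 * m)%N by rewrite /m; lia.
- have hmk : (m < k)%N by lia.
  rewrite hv1 gn_odd.
  case: (eqVneq m 0%N) => hm0.
  + rewrite hm0.
    case: (eqVneq ve 0%N) => he.
    * exists [:: 2 * 1; 2 * 1 + 1]%N; split; first (split; fin).
      rewrite !big_cons big_nil gn_odd (gn_even k 1); [|lia|lia].
      rewrite subnn; vec.
    * exists [:: 0]%N; split; first (split; fin).
      by rewrite big_cons big_nil gn_zero addr0.
  + case: (boolP (ve \in [:: 2 * m; 2 * (m - 1) + 1]%N)) => hin; rewrite ?inE in hin.
    * case: (eqVneq m (k - 1)%N) => hmk1.
      - exists [:: 2 * k]%N; split; first (split; fin).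
        rewrite big_cons big_nil gn_top; last lia.
        by rewrite addr0 hmk1.
      - exists [:: 2 * (m + 1); 2 * (m + 1) + 1]%N; split; first (split; fin).
        rewrite !big_cons big_nil gn_odd (gn_even k (m+1)); [|lia|lia].
        rewrite addnK; vec.
    * exists [:: 2 * m; 2 * (m - 1) + 1]%N; split; first (split; fin).
      rewrite !big_cons big_nil gn_odd (gn_even k (m)); [|lia|lia].
      vec.
- rewrite hv1.
  case: (eqVneq m 0%N) => hm0.
  + rewrite hm0 muln0 gn_zero.
    case: (eqVneq ve (2 * 0 + 1)%N) => he.
    * exists [:: 2 * 1; 2 * 1 + 1]%N; split; first (split; fin).
      rewrite !big_cons big_nil gn_odd (gn_even k 1); [|lia|lia].
      rewrite subnn; vec.
    * exists [:: 2 * 0 + 1]%N; split; first (split; fin).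
      by rewrite big_cons big_nil gn_odd addr0.
  + case: (eqVneq m k) => hmk.
    * rewrite hmk gn_top; last lia.
      case: (eqVneq ve (2 * (k - 1) + 1)%N) => he.
      - exists [:: 2 * (k - 1); 2 * (k - 2) + 1]%N; split; first (split; fin).
        rewrite !big_cons big_nil gn_odd (gn_even k (k-1)); [|lia|lia].
        have -> : (k - 1 - 1 = k - 2)%N by lia.
        vec.
      - exists [:: 2 * (k - 1) + 1]%N; split; first (split; fin).
        by rewrite big_cons big_nil gn_odd addr0.
    * have hmk' : (m < k)%N by lia.
      rewrite gn_even; [|lia|lia].
      case: (eqVneq ve (2 * (m - 1) + 1)%N) => he1.
      - case: (eqVneq m 1%N) => hm1.
        + rewrite hm1 subnn.
          exists [:: 0; 2 * 1 + 1]%N; split; first (split; fin).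
          rewrite !big_cons big_nil gn_odd gn_zero; vec.
        + exists [:: 2 * (m - 1); 2 * (m - 2) + 1; 2 * m + 1]%N; split; first (split; fin).
          rewrite !big_cons big_nil !gn_odd (gn_even k (m-1)); [|lia|lia].
          have -> : (m - 1 - 1 = m - 2)%N by lia.
          vec.
      - case: (eqVneq ve (2 * m + 1)%N) => he2.
        + case: (eqVneq m (k - 1)%N) => hmk1.
          * exists [:: 2 * (m - 1) + 1; 2 * k]%N; split; first (split; fin).
            rewrite !big_cons big_nil !gn_odd gn_top; last lia.
            rewrite -hmk1; vec.
          * exists [:: 2 * (m - 1) + 1; 2 * (m + 1); 2 * (m + 1) + 1]%N; split; first (split; fin).
            rewrite !big_cons big_nil !gn_odd (gn_even k (m+1)); [|lia|lia].
            rewrite addnK; vec.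
        + exists [:: 2 * (m - 1) + 1; 2 * m + 1]%N; split; first (split; fin).
          rewrite !big_cons big_nil !gn_odd; vec.
Qed.

Lemma big_setseq (R : Type) (idx : R) (op : Monoid.com_law idx) n (s : seq nat)
  (F : nat -> R) : uniq s -> all (fun x => x < n)%N s ->
  \big[op/idx]_(j in [set j : 'I_n | val j \in s]) F (val j)
  = \big[op/idx]_(x <- s) F x.
Proof.
move=> us al.
rewrite (eq_bigl (fun j : 'I_n => val j \in s)); last by move=> j; rewrite inE.
rewrite -(big_map (@nat_of_ord n) (fun x => x \in s) F).
have -> : index_enum 'I_n = enum 'I_n by rewrite enumT [LHS]unlock.
rewrite val_enum_ord -big_filter.
apply: perm_big; apply: uniq_perm.
- by rewrite filter_uniq // iota_uniq.
- by [].
move=> x; rewrite mem_filter mem_iota add0n /=.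
case xs: (x \in s) => //=.
by move/allP: al => /(_ x xs).
Qed.

Theorem theorem4p4 (k : nat) (hk : (2 <= k)%N) (E : {set 'I_(2 * k + 1)}) :
  (#|E| <= 2)%N -> parallel_repair E 3.
Proof.
move=> hE i hi.
have hD : (#|E :\ i| <= 1)%N by move: hE; rewrite (cardsD1 i E) hi.
have [e He] : exists e, forall x, x \in E -> x = i \/ x = e.
  case: (set_0Vmem (E :\ i)) => [h0 | [e he]].
  - exists i => x xE; left; apply/eqP; apply/negPn/negP => xi.
    by have := in_set0 x; rewrite -h0 !inE xi xE.
  - exists e => x xE; case: (eqVneq x i) => xi; first by left.
    right; apply: (card_le1_eqP hD) => //; by rewrite !inE xi xE.
have [s [[us al ss nis nes] hs]] := @key k hk (val i) (val e) (ltn_ord i).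
exists [set j : 'I_(2 * k + 1) | val j \in s]; split.
- split; first by rewrite inE.
  rewrite gcolE hs -(@big_setseq _ _ +%R (2 * k + 1) s (gn k) us al).
  by apply: eq_bigr.
- apply/pred0P => x /=; apply/negbTE/negP => /andP [xs xE].
  move: xs; rewrite inE; case: (He x xE) => ->; by apply/negP.
- rewrite -sum1_card (@big_setseq nat 0%N addn (2 * k + 1) s (fun _ => 1%N) us al) sum1_size //.
Qed.
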